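(* Let $A$ be a deterministic KAT automaton over $(\Sigma,T_0)$ and $\mathfrak{t}:T_0\to\mathsf{BA}(T_1)$. Then $L(\mathsf{compose}_{\mathfrak{t}}(A))=\mathrm{apply}_{\mathfrak{t}}(L(A))$.
   Context: Atoms $\mathsf{At}_T=2^T$; $\mathsf{BA}(T)$ Boolean expressions over $T$; $\alpha\le b$ means $b$ holds under the assignment making exactly the tests in $\alpha$ true. Guarded strings: words in $\mathsf{At}_T(\Sigma\mathsf{At}_T)^*$. Deterministic KAT automaton over $(\Sigma,T)$: $A=(Q,\delta,\iota)$, $Q$ finite, $\delta:Q\times\mathsf{At}_T\to\{\mathsf{accept},\mathsf{reject}\}+\Sigma\times Q$, $\iota:\mathsf{At}_T\to\{\mathsf{accept},\mathsf{reject}\}+\Sigma\times Q$. $L_A(\gamma)$ is the smallest set with $\gamma(\alpha)=\mathsf{accept}\Rightarrow\alpha\in L_A(\gamma)$ and $\gamma(\alpha)=(p,q)$, $w\in L_A(\delta(q,-))\Rightarrow\alpha pw\in L_A(\gamma)$; $L(A)=L_A(\iota)$. $\mathsf{compose}_{\mathfrak{t}}(A)$ for $A=(Q,\delta,\iota)$ over $(\Sigma,T_0)$: for $\beta\in\mathsf{At}_{T_1}$ let $\mathfrak{t}^{-1}(\beta)\in\mathsf{At}_{T_0}$ be the atom with $t\in\mathfrak{t}^{-1}(\beta)$ iff $\beta\le\mathfrak{t}(t)$; then $\mathsf{compose}_{\mathfrak{t}}(A)=(Q,\delta',\iota')$ over $(\Sigma,T_1)$ with $\delta'(q,\beta)=\delta(q,\mathfrak{t}^{-1}(\beta))$,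 $\iota'(\beta)=\iota(\mathfrak{t}^{-1}(\beta))$. $\beta\in\mathsf{At}_{T_1}$ is $\mathfrak{t}$-consistent with $\alpha\in\mathsf{At}_{T_0}$ if for all $t\in T_0$, $\alpha\le t$ iff $\beta\le\mathfrak{t}(t)$. For a guarded language $L$ over $(\Sigma,T_0)$, $\mathrm{apply}_{\mathfrak{t}}(L)$ is the set of guarded strings $\beta_0p_0\beta_1\cdots p_{n-1}\beta_n$ over $(\Sigma,T_1)$ such that some $\alpha_0p_0\alpha_1\cdots p_{n-1}\alpha_n\in L$ has each $\beta_i$ $\mathfrak{t}$-consistent with $\alpha_i$. *)

(* Defs.v *)
From mathcomp Require Import all_boot.
Set Implicit Arguments. Unset Strict Implicit. Unset Printing Implicit Defensive.

Inductive BA (T : Type) : Type :=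
| BFalse | BTrue | BTest of T | BNot of BA T | BAnd of BA T & BA T | BOr of BA T & BA T.
Arguments BFalse {T}. Arguments BTrue {T}.

(* Atoms At_T = 2^T : an atom is the set of tests that are true *)
Definition atom (T : finType) := {set T}.

(* alpha <= b : b holds under the assignment making exactly the tests in alpha true *)
Fixpoint atom_le (T : finType) (a : atom T) (b : BA T) : bool :=
  match b with
  | BFalse => false
  | BTrue => true
  | BTest t => t \in a
  | BNot b => ~~ atom_le a b
  | BAnd b c => atom_le a b && atom_le a c
  | BOr b c => atom_le a b || atom_le a c
  end.

(* Guarded strings alpha_0 p_0 alpha_1 ... p_{n-1} alpha_n as (alpha_0, [(p_0,alpha_1);...]) *)
Definition gstring (S T : finType) := (atom T * seq (S * atom T))%type.
Definition glang (S T : finType) := gstring S T -> Prop.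

Inductive res (S Q : Type) := Accept | Reject | Step of S & Q.
Arguments Accept {S Q}. Arguments Reject {S Q}.

Record KATaut (S T : finType) := KATAut {
  kstate : finType;
  kdelta : kstate -> atom T -> res S kstate;
  kinit  : atom T -> res S kstate }.

Inductive LA (S T : finType) (A : KATaut S T) : (atom T -> res S (kstate A)) -> gstring S T -> Prop :=
| LA_acc (gam : atom T -> res S (kstate A)) (a : atom T) :
    gam a = Accept -> @LA S T A gam (a, [::])
| LA_step (gam : atom T -> res S (kstate A)) (a : atom T) (p : S) (q : kstate A)
    (w : gstring S T) :
    gam a = Step p q -> @LA S T A (@kdelta S T A q) w -> @LA S T A gam (a, (p, w.1) :: w.2).

Definition Lang (S T : finType) (A : KATaut S T) : glang S T := @LA S T A (@kinit S T A).

Definition tinv (T0 T1 : finType) (tt : T0 -> BA T1) (b : atom T1) : atom T0 :=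
  [set t | atom_le b (tt t)].

Definition compose (S T0 T1 : finType) (tt : T0 -> BA T1) (A : KATaut S T0) : KATaut S T1 :=
  @KATAut S T1 (kstate A) (fun q b => @kdelta S T0 A q (tinv tt b)) (fun b => @kinit S T0 A (tinv tt b)).

Definition consistent (T0 T1 : finType) (tt : T0 -> BA T1) (b : atom T1) (a : atom T0) : bool :=
  [forall t, (t \in a) == atom_le b (tt t)].

Definition apply_t (S T0 T1 : finType) (tt : T0 -> BA T1) (L : glang S T0) : glang S T1 :=
  fun g => exists g0 : gstring S T0, L g0 /\ consistent tt g.1 g0.1 /\
    all2 (fun x y => (x.1 == y.1) && consistent tt x.2 y.2) g.2 g0.2.

(* Main.v *)
Require Import Defs.
From mathcomp Require Import all_boot.

Section Aux.
Variables (S T0 T1 : finType) (A : KATaut S T0) (tt : T0 -> BA T1).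

Definition mapg (g : gstring S T1) : gstring S T0 :=
  (tinv tt g.1, map (fun x => (x.1, tinv tt x.2)) g.2).

Lemma consP b a : consistent tt b a = (a == tinv tt b).
Proof.
apply/forallP/eqP => [H|->].
  by apply/setP => t; rewrite inE; apply/eqP; exact: H.
by move=> t; rewrite inE.
Qed.

Lemma all2P (s : seq (S * atom T1)) s0 :
  all2 (fun x y => (x.1 == y.1) && consistent tt x.2 y.2) s s0 =
  (map (fun x => (x.1, tinv tt x.2)) s == s0).
Proof.
elim: s s0 => [|x s IH] [|y s0] //=.
rewrite IH consP; case: x y => [p b] [q a] /=.
by rewrite -[_ :: _ == _ :: _]/((_ == _) && _) xpair_eqE (eq_sym a).
Qed.

Lemma fwd gam' g : @LA S T1 (compose tt A) gam' g ->
  forall gam, (forall b, gam' b = gam (tinv tt b)) -> @LA S T0 A gam (mapg g).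
Proof.
elim => {gam' g} [gam' a Ha|gam' a p q w Ha _ IH] gam E.
  by apply: LA_acc; rewrite -E.
rewrite /mapg /=.
apply: (@LA_step _ _ A gam (tinv tt a) p q (mapg w)); first by rewrite -E.
exact: IH.
Qed.

Lemma bwd gam g0 : @LA S T0 A gam g0 -> forall g gam', mapg g = g0 ->
  (forall b, gam' b = gam (tinv tt b)) -> @LA S T1 (compose tt A) gam' g.
Proof.
elim => {gam g0} [gam a Ha|gam a p q w Ha _ IH] [b s] gam' /= E HE.
  case: s E => [|x s] //= [Eb]; apply: LA_acc; by rewrite HE Eb.
case: s E => [|[p' b'] s] //= [Eb Ep Eb' Es].
subst p'.
apply: (@LA_step _ _ (compose tt A) gam' b p q (b', s)).
  by rewrite HE Eb.
apply: IH => //.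
by rewrite /mapg /= Eb' Es; case: w {Eb' Es}.
Qed.
End Aux.

Theorem proposition6p6 (S T0 T1 : finType) (A : KATaut S T0) (tt : T0 -> BA T1) :
  forall g : gstring S T1, Lang (compose tt A) g <-> apply_t tt (Lang A) g.
Proof.
move=> g; split.
  move=> H; exists (@mapg S T0 T1 tt g); split; first by have := @fwd S T0 T1 A tt _ _ H (kinit A) (fun _ => erefl).
  by rewrite consP all2P /mapg /= !eqxx.
case=> g0 [H [Hc Ha]].
rewrite consP in Hc; rewrite all2P in Ha.
apply: (@bwd S T0 T1 A tt _ _ H) => //.
by case: g0 H Hc Ha => a0 s0 H /= /eqP -> /eqP <-.
Qed.
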